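(* Let $\Omega\subseteq\mathbb{R}^{m\times m}$, let $\mathcal{P}\subseteq\mathbb{R}^{m\times m}$, and let $s:\Omega^2\times\mathcal{P}\to\mathbb{R}$ be a $P$-score. Let $n\ge 2$ and define the $\mathcal{G}$-align distance function induced by $s$ as $d_{\mathcal{G}}:\Omega^n\to\mathbb{R}$, $$d_{\mathcal{G}}(A_1,\dots,A_n)=\min_{P\in S}\frac12\sum_{i,j\in[n]} s(A_i,A_j,P_{i,j}),$$ where $S$ is the set of families $\{P_{i,j}\}_{i,j\in[n]}$ with $P_{i,j}\in\mathcal{P}$ for all $i,j$, $P_{i,k}P_{k,j}=P_{i,j}$ for all $i,j,k\in[n]$, and $P_{i,i}=I$ for all $i\in[n]$. Then $d_{\mathcal{G}}$ is a pseudo $n$-metric.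
   Context: $[n]=\{1,\dots,n\}$. A map $s:\Omega^2\times\mathcal{P}\to\mathbb{R}$ is a $P$-score if $\mathcal{P}$ is closed under inversion (and, implicitly, contains $I$ and the products appearing below), and for all $P,P'\in\mathcal{P}$ and $A,B,C\in\Omega$: $s(A,B,P)\ge 0$; $s(A,A,I)=0$; $s(A,B,P)=s(B,A,P^{-1})$; $s(A,B,P)+s(B,C,P')\ge s(A,C,PP')$. Notation: $A_{1:n}=(A_1,\dots,A_n)$; for $A_{n+1}\in\Omega$, $A^i_{1:n,n+1}$ is $A_{1:n}$ with $A_i$ replaced by $A_{n+1}$; $A_{\sigma(1:n)}$ is the sequence with $i$-th entry $A_{\sigma(i)}$ for a permutation $\sigma$. A map $D:\Omega^n\to\mathbb{R}$ is a pseudo $n$-metric if for all $A_1,\dots,A_{n+1}\in\Omega$ and all permutations $\sigma$: $D(A_{1:n})\ge0$; $D(A_{1:n})=D(A_{\sigma(1:n)})$; $D(A_{1:n})\le\sum_{i=1}^n D(A^i_{1:n,n+1})$; and $D(A,\dots,A)=0$ for all $A\in\Omega$. *)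

(* Defs.v *)
From HB Require Import structures.
From mathcomp Require Import all_boot all_order all_algebra all_fingroup.
From mathcomp Require Import reals.
Set Implicit Arguments. Unset Strict Implicit. Unset Printing Implicit Defensive.
Import Order.TTheory GRing.Theory Num.Theory.
Local Open Scope ring_scope.

Section Defs.
Variables (R : realType) (m : nat).
Local Notation Mat := 'M[R]_m.

(* s : Omega^2 x Pset -> R is a P-score.  Pset is closed under inversion
   (so its elements are invertible) and, implicitly, contains I and the
   products P P' appearing in the triangle axiom. *)
Definition P_score (Omega Pset : pred Mat) (s : Mat -> Mat -> Mat -> R) : Prop :=
  (forall P, Pset P -> P \in unitmx /\ Pset (invmx P)) /\
  Pset 1%:M /\
  (forall P P', Pset P -> Pset P' -> Pset (P *m P')) /\
  (forall A B P, Omega A -> Omega B -> Pset P -> 0 <= s A B P) /\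
  (forall A, Omega A -> s A A 1%:M = 0) /\
  (forall A B P, Omega A -> Omega B -> Pset P -> s A B P = s B A (invmx P)) /\
  (forall A B C P P', Omega A -> Omega B -> Omega C -> Pset P -> Pset P' ->
     s A C (P *m P') <= s A B P + s B C P').

Definition replace_at (n : nat) (A : 'I_n -> Mat) (i : 'I_n) (B : Mat) : 'I_n -> Mat :=
  fun j => if j == i then B else A j.

Definition pseudo_n_metric (n : nat) (Omega : pred Mat) (D : ('I_n -> Mat) -> R) : Prop :=
  [/\ (forall A : 'I_n -> Mat, (forall i, Omega (A i)) -> 0 <= D A),
      (forall (A : 'I_n -> Mat) (sigma : 'S_n), (forall i, Omega (A i)) ->
         D A = D (fun i => A (sigma i))),
      (forall (A : 'I_n -> Mat) (B : Mat), (forall i, Omega (A i)) -> Omega B ->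
         D A <= \sum_(i < n) D (replace_at A i B)) &
      (forall B : Mat, Omega B -> D (fun _ => B) = 0)].

Definition admissible (n : nat) (Pset : pred Mat) (P : 'I_n -> 'I_n -> Mat) : Prop :=
  [/\ (forall i j, Pset (P i j)),
      (forall i j k, P i k *m P k j = P i j) &
      (forall i, P i i = 1%:M)].

Definition galign_cost (n : nat) (s : Mat -> Mat -> Mat -> R)
  (A : 'I_n -> Mat) (P : 'I_n -> 'I_n -> Mat) : R :=
  2^-1 * \sum_(i < n) \sum_(j < n) s (A i) (A j) (P i j).

Definition is_galign_distance (n : nat) (Omega Pset : pred Mat)
  (s : Mat -> Mat -> Mat -> R) (d : ('I_n -> Mat) -> R) : Prop :=
  forall A : 'I_n -> Mat, (forall i, Omega (A i)) ->
    (exists2 P, admissible Pset P & d A = galign_cost s A P) /\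
    (forall P, admissible Pset P -> d A <= galign_cost s A P).

End Defs.

(* Main.v *)
Require Import Defs.
From HB Require Import structures.
From mathcomp Require Import all_boot all_order all_algebra all_fingroup.
From mathcomp Require Import reals.
From Stdlib Require Import IndefiniteDescription.
From mathcomp Require Import lra.
Set Implicit Arguments. Unset Strict Implicit. Unset Printing Implicit Defensive.
Import Order.TTheory GRing.Theory Num.Theory.
Local Open Scope ring_scope.

Lemma cost_reindex (R : realType) (m n : nat) (s : 'M[R]_m -> 'M[R]_m -> 'M[R]_m -> R)
  (A A' : 'I_n -> 'M[R]_m) (P : 'I_n -> 'I_n -> 'M[R]_m) (h : 'I_n -> 'I_n) :
  injective h -> (forall i, A' i = A (h i)) ->
  galign_cost s A' (fun i j => P (h i) (h j)) = galign_cost s A P.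
Proof.
move=> hi hA; rewrite /galign_cost; congr (_ * _).
rewrite [RHS](reindex_inj hi); apply: eq_bigr => i _.
rewrite [RHS](reindex_inj hi); apply: eq_bigr => j _.
by rewrite !hA.
Qed.

Lemma adm_reindex (R : realType) (m n : nat) (Pset : pred 'M[R]_m)
  (P : 'I_n -> 'I_n -> 'M[R]_m) (h : 'I_n -> 'I_n) :
  admissible Pset P -> admissible Pset (fun i j => P (h i) (h j)).
Proof. by case=> h1 h2 h3; split. Qed.

Theorem theorem2 (R : realType) (m n : nat) (Omega Pset : pred 'M[R]_m)
  (s : 'M[R]_m -> 'M[R]_m -> 'M[R]_m -> R) (d : ('I_n -> 'M[R]_m) -> R) :
  P_score Omega Pset s -> (2 <= n)%N ->
  is_galign_distance Omega Pset s d ->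
  pseudo_n_metric Omega d.
Proof.
move=> [Pinv [P1 [PM [s0 [sAA [ssym stri]]]]]] n2 hd.
have cost0 : forall (A : 'I_n -> 'M[R]_m) P, (forall i, Omega (A i)) -> admissible Pset P ->
    0 <= galign_cost s A P.
  move=> A P hA [hP hP2 hP3]; rewrite /galign_cost mulr_ge0 // ?invr_ge0 ?ler0n //.
  by apply: sumr_ge0 => i _; apply: sumr_ge0 => j _; apply: s0.
have dge0 : forall A : 'I_n -> 'M[R]_m, (forall i, Omega (A i)) -> 0 <= d A.
  move=> A hA; have [[P hP ->] _] := hd A hA; exact: cost0.
split => //.
- move=> A sigma hA.
  have hAs : forall i, Omega (A (sigma i)) by [].
  have [[P hP eP] _] := hd A hA.
  have [[Q hQ eQ] _] := hd _ hAs.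
  apply/le_anti/andP; split.
  + rewrite eQ -(cost_reindex s (A:=fun i => A (sigma i)) (A' := A) Q (h:=sigma^-1)%g).
    * by apply: (hd A hA).2; apply: adm_reindex.
    * exact: perm_inj.
    * by move=> i; rewrite permKV.
  + rewrite eP -(cost_reindex s (A:=A) (A' := fun i => A (sigma i)) P (h:=sigma)) //.
    * by apply: (hd _ hAs).2; apply: adm_reindex.
    * exact: perm_inj.
- move=> A B hA hB.
  have hAi : forall i j, Omega (replace_at A i B j).
    by move=> i j; rewrite /replace_at; case: ifP.
  have : forall i, exists Q, admissible Pset Q /\
      d (replace_at A i B) = galign_cost s (replace_at A i B) Q.
    by move=> i; have [[Q hQ eQ] _] := hd _ (hAi i); exists Q.
  case/functional_choice => Q hQ.
  have hQP : forall i j k, Pset (Q i j k).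
    by move=> i j k; case: (hQ i).1 => h _ _; exact: h.
  have hQinv : forall i a b, invmx (Q i a b) = Q i b a.
    move=> i a b; case: (hQ i).1 => _ h2 h3.
    have hu := (Pinv _ (hQP i a b)).1.
    rewrite -[LHS]mulmx1 -(h3 a) -(h2 a a b) mulmxA mulVmx // mul1mx //.
  pose c i j := s (A j) B (Q i j i).
  have ex0 : forall j : 'I_n, exists i, i != j.
    move=> j.
    have hlt : ((if val j == 0%N then 1 else 0) < n)%N.
      by case: ifP => _; [exact: n2 | exact: ltnW n2].
    exists (Ordinal hlt).
    apply/eqP => /(congr1 val)/=.
    by case: eqP => [-> //|hj h]; apply: hj; rewrite -h.
  have hmin : forall j, exists i, i != j /\ forall i', i' != j -> c i j <= c i' j.
    move=> j; have [i0 hi0] := ex0 j.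
    case: (@arg_minP _ _ _ i0 (fun i => i != j) (fun i => c i j) hi0) => i hi himin.
    by exists i; split => // i' hi'; apply: himin.
  case/functional_choice: hmin => ii hii.
  pose g j := Q (ii j) j (ii j).
  have hgP : forall j, Pset (g j) by move=> j; exact: hQP.
  have hgu : forall j, g j \in unitmx by move=> j; exact: (Pinv _ (hgP j)).1.
  pose P j k := g j *m invmx (g k).
  have hPadm : admissible Pset P.
    split.
    - move=> j k; apply: PM; [exact: hgP | exact: (Pinv _ (hgP _)).2].
    - by move=> i j k; rewrite /P mulmxA -[g i *m _ *m g k]mulmxA mulVmx ?mulmx1.
    - by move=> i; rewrite /P mulmxV.
  apply: le_trans ((hd A hA).2 P hPadm) _.
  pose a j := s (A j) B (g j).
  pose S := \sum_j a j.
  have step1 : galign_cost s A P <= 2^-1 * ((S *+ n + S *+ n) - (S + S)).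
    rewrite /galign_cost ler_wpM2l ?invr_ge0 ?ler0n //.
    have e1 : forall j, \sum_k (if j == k then 0 else a j + a k)
                = \sum_k (a j + a k) - (a j + a j).
      move=> j; rewrite (bigD1 j) //= eqxx add0r [in RHS](bigD1 j) //=.
      rewrite addrC addrK; apply: eq_bigr => k /negbTE.
      by rewrite eq_sym => ->.
    apply: le_trans (_ : \sum_j \sum_k (if j == k then 0 else a j + a k) <= _).
      apply: ler_sum => j _; apply: ler_sum => k _.
      case: eqP => [<-|hjk].
        by rewrite /P mulmxV // sAA.
      have := stri (A j) B (A k) (g j) (invmx (g k)) (hA j) hB (hA k) (hgP j)
        (Pinv _ (hgP k)).2.
      have h2 := ssym B (A k) (invmx (g k)) hB (hA k) (Pinv _ (hgP k)).2.
      by rewrite invmxK in h2; rewrite h2.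
    under eq_bigr do rewrite e1.
    rewrite sumrB le_eqVlt; apply/orP; left; apply/eqP.
    congr (_ - _); last by rewrite big_split.
    rewrite (eq_bigr (fun j => a j *+ n + S)); last first.
      by move=> j _; rewrite big_split /= sumr_const card_ord.
    by rewrite big_split /= sumr_const card_ord -sumrMnl.
  have step2 : 2^-1 * ((S *+ n + S *+ n) - (S + S))
      <= \sum_i \sum_(j | j != i) c i j.
    have -> : 2^-1 * ((S *+ n + S *+ n) - (S + S)) = \sum_j \sum_(i | i != j) a j.
      under [RHS]eq_bigr do rewrite sumr_const cardC1 card_ord.
      rewrite sumrMnl.
      have eSn : S *+ n = S *+ n.-1 + S by rewrite -mulrSr prednK // ltnW.
      rewrite eSn addrACA addrK -/S.
      by set x := S *+ n.-1; lra.
    apply: le_trans (_ : \sum_j \sum_(i | i != j) c i j <= _).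
      apply: ler_sum => j _; apply: ler_sum => i hi.
      by case: (hii j) => _ h; apply: h.
    rewrite le_eqVlt; apply/orP; left; apply/eqP.
    rewrite (exchange_big_dep predT) //=.
    apply: eq_bigr => i _; apply: eq_bigl => j /=; by rewrite eq_sym.
  apply: le_trans step1 (le_trans step2 _).
  apply: ler_sum => i _.
  rewrite (hQ i).2 /galign_cost.
  set A' := replace_at A i B.
  have tge0 : forall j k, 0 <= s (A' j) (A' k) (Q i j k).
    by move=> j k; apply: s0; rewrite ?hAi ?hQP.
  have hAi1 : A' i = B by rewrite /A' /replace_at eqxx.
  have hAj : forall j, j != i -> A' j = A j.
    by move=> j hj; rewrite /A' /replace_at (negbTE hj).
  have L1 : \sum_(j | j != i) c i j <= \sum_k s (A' i) (A' k) (Q i i k).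
    rewrite [X in _ <= X](bigD1 i) //=; apply: ler_wpDl; first exact: tge0.
    rewrite le_eqVlt; apply/orP; left; apply/eqP.
    apply: eq_bigr => k hk.
    rewrite hAi1 hAj // /c (ssym (A k) B (Q i k i)) ?hQinv ?hA ?hQP //.
  have L2 : \sum_(j | j != i) c i j <= \sum_(j | j != i) \sum_k s (A' j) (A' k) (Q i j k).
    apply: ler_sum => j hj.
    rewrite [X in _ <= X](bigD1 i) //=; apply: ler_wpDr.
      by apply: sumr_ge0 => k _; exact: tge0.
    by rewrite hAi1 hAj.
  have h2 : (0 : R) < 2 by [].
  rewrite -(ler_pM2l h2) mulrA mulfV ?mul1r ?pnatr_eq0 //.
  rewrite [X in _ <= X](bigD1 i) //=.
  set Z := \sum_(j | j != i) c i j.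
  have -> : 2 * Z = Z + Z by rewrite mulr_natl mulr2n.
  exact: lerD L1 L2.
- move=> B hB; apply/le_anti; rewrite dge0 // andbT.
  have -> : 0 = galign_cost s (fun _ : 'I_n => B) (fun _ _ => 1%:M).
    by rewrite /galign_cost big1 ?mulr0 // => i _; rewrite big1 // => j _; rewrite sAA.
  apply: (hd _ (fun=> hB)).2; split => // i j k; exact: mul1mx.
Qed.
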